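(* For every integer $n\geq 1$, \[ \sum_{\sigma\in\mathcal{Q}_n} q^{\operatorname{lrmin}(\sigma)} x^{\operatorname{ap}(\sigma)} y^{\operatorname{even}(\sigma)}= \sum_{\pi\in \overline{\mathfrak{S}}_n}q^{\operatorname{lrmin}(\pi)} x^{\operatorname{asc}(\pi)} y^{\operatorname{mark}(\pi)}. \]
   Context: Let $[n]_2$ be the multiset $\{1,1,2,2,\dots,n,n\}$. A Stirling permutation of order $n$ is a permutation $\sigma=\sigma_1\cdots\sigma_{2n}$ of $[n]_2$ such that for each $i\in[n]$ every entry between the two occurrences of $i$ is greater than $i$; $\mathcal{Q}_n$ denotes the set of these. An ascent plateau of $\sigma\in\mathcal{Q}_n$ is an entry $\sigma_i$ with $2\le i\le 2n-1$ and $\sigma_{i-1}<\sigma_i=\sigma_{i+1}$; $\operatorname{ap}(\sigma)$ is the number of ascent plateaux. An entry $k$ of $\sigma$ is even indexed if the first occurrence of $k$ is at an even position of $\sigma$; $\operatorname{even}(\sigma)$ is the number of even indexed entries (each value $k\in[n]$ counted once). For a word $w=w_1\cdots w_m$, a left-to-right minimum is an entry $w_i$ with $i=1$ or $w_i<w_j$ for all $j<i$; $\operatorname{lrmin}(w)$ is the number of distinct values that are left-to-right minima (for Stirling permutations this is the number of values $k$ some occurrence of which is a left-to-right minimum). A marked permutation of $[n]$ is a permutation $\pi=\pi_1\cdots\pi_n$ of $[n]$ together with a choice of marks on some (possibly none) of its entries that are not left-to-right minima; left-to-right minima are never marked. $\overline{\mathfrak{S}}_n$ is the set of marked permutations of $[n]$.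 For $\pi\in\overline{\mathfrak{S}}_n$, $\operatorname{mark}(\pi)$ is the number of marked entries, and $\operatorname{lrmin}(\pi)$ and $\operatorname{asc}(\pi)$ are computed ignoring marks, where $\operatorname{asc}(\pi)$ is the number of indices $i\in\{2,\dots,n\}$ with $\pi_i>\pi_{i-1}$. *)

(* Defs.v *)
From mathcomp Require Import all_boot all_order all_algebra.
Set Implicit Arguments. Unset Strict Implicit. Unset Printing Implicit Defensive.

(* Words are seq nat, positions are 0-based internally (position i here is
   position i+1 in the paper). *)

Definition multiset2 (n : nat) : seq nat := flatten [seq [:: i; i] | i <- iota 1 n].

Definition stirling_cond (s : seq nat) : bool :=
  [forall j : 'I_(size s), forall l : 'I_(size s),
     ((j < l) && (nth 0 s j == nth 0 s l)) ==>
     all (fun k => nth 0 s j < nth 0 s k) (iota j.+1 (l - j.+1))].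

Definition stirling_perms (n : nat) : seq (seq nat) :=
  [seq s <- permutations (multiset2 n) | stirling_cond s].

(* ap: 1-based positions 2..size-1, i.e. 0-based 1..size-2. *)
Definition ap (s : seq nat) : nat :=
  count (fun i => (nth 0 s i.-1 < nth 0 s i) && (nth 0 s i == nth 0 s i.+1))
        (iota 1 (size s).-2).

(* even: values k in [n] whose first occurrence is at an even (1-based)
   position, i.e. at an odd 0-based index. *)
Definition even_idx (n : nat) (s : seq nat) : nat :=
  count (fun k => odd (index k s)) (iota 1 n).

Definition lrmin_pos (s : seq nat) (i : nat) : bool :=
  all (fun j => nth 0 s i < nth 0 s j) (iota 0 i).

Definition lrmin (s : seq nat) : nat :=
  count (fun v => has (fun i => (nth 0 s i == v) && lrmin_pos s i) (iota 0 (size s)))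
        (undup s).

(* asc: 1-based indices 2..n with pi_i > pi_{i-1}. *)
Definition asc (s : seq nat) : nat :=
  count (fun i => nth 0 s i.-1 < nth 0 s i) (iota 1 (size s).-1).

(* A marked permutation of [n] is a pair (p, M) with p a permutation of
   1..n (an element of permutations (iota 1 n)) and M : {set 'I_n} the set of
   (0-based) positions of marked entries, none of which is a left-to-right
   minimum. *)
Definition valid_marks (n : nat) (p : seq nat) (M : {set 'I_n}) : bool :=
  [forall i in M, ~~ lrmin_pos p i].

(* Main.v *)
Require Import Defs.
From mathcomp Require Import all_boot all_order all_algebra.
From mathcomp Require Import zify ring.
Import GRing.Theory.
Set Implicit Arguments. Unset Strict Implicit. Unset Printing Implicit Defensive.

Definition ins (k m i : nat) (s : seq nat) := take i s ++ nseq k m ++ drop i s.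

Lemma nth_ins k m i s q : i <= size s ->
  nth 0 (ins k m i s) q = if q < i then nth 0 s q else if q < i + k then m else nth 0 s (q - k).
Proof.
move=> hi; rewrite /ins nth_cat size_takel //.
case: ltnP => h1; first by rewrite nth_take.
rewrite nth_cat size_nseq; case: ltnP => h2.
  by rewrite nth_nseq h2 ifT //; lia.
rewrite ifF; last by lia.
rewrite nth_drop; congr nth; lia.
Qed.

Lemma size_ins k m i s : i <= size s -> size (ins k m i s) = size s + k.
Proof. move=> hi; rewrite /ins !size_cat size_takel // size_nseq size_drop; lia. Qed.

Lemma perm_ins k m i s : perm_eq (ins k m i s) (s ++ nseq k m).
Proof.
rewrite /ins perm_catCA perm_sym perm_catC; by rewrite cat_take_drop.
Qed.

Lemma iota_add2 a n : iota a (n + 2) = iota a n ++ [:: a + n; (a + n).+1].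
Proof. by rewrite iotaD. Qed.

Lemma count_shift (P Q : pred nat) a d L :
  (forall q, a <= q < a + L -> P (q + d) = Q q) ->
  count P (iota (a + d) L) = count Q (iota a L).
Proof.
move=> h; rewrite [a + d]addnC iotaDl count_map; apply: eq_in_count => q.
rewrite mem_iota /= => hq; rewrite addnC; exact: h.
Qed.

Definition SCP (s : seq nat) := forall j k l, j < k -> k < l -> l < size s ->
  nth 0 s j = nth 0 s l -> nth 0 s j < nth 0 s k.

Lemma SCPP s : reflect (SCP s) (stirling_cond s).
Proof.
apply: (iffP forallP) => [h j k l hjk hkl hl hjl|h].
  have hj : j < size s by lia.
  have := forallP (h (Ordinal hj)) (Ordinal hl) => /implyP /=.
  rewrite hjl eqxx andbT => /(_ (ltn_trans hjk hkl)) /allP; apply.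
  rewrite mem_iota; lia.
move=> j; apply/forallP => l; apply/implyP => /andP [hjl /eqP e].
apply/allP => k; rewrite mem_iota => hk.
apply: (h j k l) => //; lia.
Qed.

Lemma SC_ins m i s : i <= size s -> all (fun v => v < m) s ->
  stirling_cond (ins 2 m i s) = stirling_cond s.
Proof.
move=> hi /allP ha.
have hn : forall q, q < size s -> nth 0 s q < m.
  by move=> q hq; apply: ha; apply: mem_nth.
apply/SCPP/SCPP.
- move=> h j k l hjk hkl hl e.
  pose phi q := if q < i then q else q + 2.
  have hp : forall q, nth 0 (ins 2 m i s) (phi q) = nth 0 s q.
    move=> q; rewrite nth_ins // /phi; case: (ltnP q i) => hq; first by rewrite hq.
    rewrite ifF; last lia. rewrite ifF; last lia. congr nth; lia.
  rewrite -!hp; apply: (h (phi j) (phi k) (phi l)); rewrite ?hp //;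
    rewrite /phi ?size_ins //; repeat case: ifP; lia.
- move=> h j k l hjk hkl; rewrite size_ins // => hl.
  rewrite !nth_ins //.
  have hj0 := hn j; have hj1 := hn (j-2); have hl0 := hn l; have hl1 := hn (l - 2).
  case: (ltnP j i) => ?; case: (ltnP j (i+2)) => ?; case: (ltnP k i) => ?;
  case: (ltnP k (i+2)) => ?; case: (ltnP l i) => ?; case: (ltnP l (i+2)) => ?;
  move=> e; first [ lia | (apply: (h _ _ _ _ _ _ e); lia) ].
Qed.

Section Lr.
Variables (k m i : nat) (s : seq nat).
Hypotheses (hk : 0 < k) (hi : i <= size s) (ha : all (fun v => v < m) s).
Let t := ins k m i s.
Let hn : forall q, q < size s -> nth 0 s q < m.
Proof. by move=> q hq; apply: (allP ha); apply: mem_nth. Qed.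
Let phi q := if q < i then q else q + k.

Lemma nth_phi q : nth 0 t (phi q) = nth 0 s q.
Proof.
rewrite /t nth_ins // /phi; case: (ltnP q i) => hq; first by rewrite hq.
rewrite ifF; last lia. rewrite ifF; last lia. congr nth; lia.
Qed.

Lemma lrpos_phi q : q < size s -> lrmin_pos t (phi q) = lrmin_pos s q.
Proof.
move=> hq; rewrite /lrmin_pos nth_phi.
apply/allP/allP => h j; rewrite mem_iota => hj.
  rewrite -(nth_phi j); apply: h; rewrite mem_iota /phi; case: ifP; case: ifP; lia.
rewrite /t nth_ins //.
case: (ltnP j i) => hj1.
  apply: h; rewrite mem_iota; move: hj; rewrite /phi; case: ifP; lia.
case: (ltnP j (i + k)) => hj2.
  by apply: hn.
apply: h; rewrite mem_iota; move: hj; rewrite /phi; case: ifP; lia.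
Qed.

Lemma nth_block q : i <= q < i + k -> nth 0 t q = m.
Proof. move=> /andP [h1 h2]; rewrite /t nth_ins // ifF ?h2 //; lia. Qed.

Lemma lrpos_block q : i <= q < i + k -> lrmin_pos t q = (q == 0).
Proof.
move=> hq; rewrite /lrmin_pos nth_block //.
case: (posnP q) => [->|qp] //.
apply/negbTE/negP => /allP /(_ 0); rewrite mem_iota qp /= => /(_ isT).
case: (posnP i) => [i0|ip].
  by rewrite nth_block ?ltnn //; lia.
rewrite /t nth_ins // ip; have := @hn 0; lia.
Qed.

Lemma pos_cases q : q < size s + k ->
  (i <= q < i + k) \/ exists2 q', q' < size s & q = phi q'.
Proof.
move=> hq; case: (ltnP q i) => h1.
  by right; exists q; [lia | rewrite /phi h1].
case: (ltnP q (i + k)) => h2; first by left; lia.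
right; exists (q - k); first lia.
rewrite /phi ifF; lia.
Qed.

Definition Hv (w : seq nat) v :=
  has (fun q => (nth 0 w q == v) && lrmin_pos w q) (iota 0 (size w)).

Lemma Hv_old v : v \in s -> Hv t v = Hv s v.
Proof.
move=> vs.
have vm : v < m by apply: (allP ha).
apply/hasP/hasP => [[q]|[q]].
  rewrite mem_iota /t size_ins // => /andP [_ hq] /andP [/eqP e lp].
  case: (pos_cases hq) => [hb|[q' hq' qe]]; last subst q.
    by move: e; rewrite nth_block //; lia.
  exists q'; first by rewrite mem_iota.
  by rewrite -nth_phi e eqxx -lrpos_phi.
rewrite mem_iota => /andP [_ hq] /andP [/eqP e lp].
exists (phi q).
  rewrite mem_iota /t size_ins // /phi; case: ifP; lia.
by rewrite nth_phi e eqxx lrpos_phi.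
Qed.

Lemma Hv_m : Hv t m = (i == 0).
Proof.
apply/hasP/idP => [[q]|/eqP i0].
  rewrite mem_iota /t size_ins // => /andP [_ hq] /andP [/eqP e lp].
  case: (pos_cases hq) => [hb|[q' hq' eq]].
    by move: lp; rewrite lrpos_block // => /eqP q0; lia.
  by move: e; rewrite eq nth_phi; have := @hn q'; lia.
exists 0; first by rewrite mem_iota /t size_ins //; lia.
by rewrite nth_block ?eqxx //; lia.
Qed.

Lemma lrmin_ins : lrmin t = lrmin s + (i == 0).
Proof.
have mt : m \notin s by apply/negP => /(allP ha); rewrite ltnn.
have e1 : t =i m :: s.
  move=> x; rewrite (perm_mem (perm_ins k m i s)) mem_cat inE mem_nseq hk /=.
  by rewrite orbC.
rewrite /lrmin ((permP (perm_undup e1)) _) /= (negbTE mt) /=.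
rewrite -/(Hv t m) Hv_m addnC; congr (_ + _).
apply: eq_in_count => v; rewrite mem_undup => vs.
exact: Hv_old.
Qed.

Lemma count_lrpos : count (fun q => ~~ lrmin_pos t q) (iota 0 (size t)) =
  count (fun q => ~~ lrmin_pos s q) (iota 0 (size s)) + (k - (i == 0)).
Proof.
rewrite /t size_ins //.
have -> : size s + k = i + (k + (size s - i)) by lia.
rewrite iotaD iotaD count_cat count_cat.
have -> : size s = i + (size s - i) by lia.
rewrite iotaD count_cat.
have e1 : count (fun q => ~~ lrmin_pos t q) (iota 0 i) = count (fun q => ~~ lrmin_pos s q) (iota 0 i).
  apply: eq_in_count => q; rewrite mem_iota => hq.
  have := lrpos_phi (q := q); rewrite /phi ifT; last lia.
  by move=> ->; last lia.
have e2 : count (fun q => ~~ lrmin_pos t q) (iota (0 + i + k) (size s - i)) =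
          count (fun q => ~~ lrmin_pos s q) (iota (0 + i) (size s - i)).
  apply: count_shift => q hq.
  have := lrpos_phi (q := q); rewrite /phi ifF; last lia.
  by move=> ->; last lia.
have e3 : count (fun q => ~~ lrmin_pos t q) (iota (0 + i) k) = k - (i == 0).
  have -> : count (fun q => ~~ lrmin_pos t q) (iota (0 + i) k) =
            count (fun q => q != 0) (iota (0 + i) k).
    apply: eq_in_count => q; rewrite mem_iota => hq.
    by rewrite lrpos_block //; lia.
  case: (posnP i) => [->|ip].
    case: k hk => // k' _; rewrite /= add0n subn1 /=.
    rewrite (eq_in_count (a2 := predT)) ?count_predT ?size_iota //.
    by move=> q; rewrite mem_iota /= -lt0n => hq; lia.
  rewrite (eq_in_count (a2 := predT)) ?count_predT ?size_iota ?subn0 //.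
  by move=> q; rewrite mem_iota /= -lt0n => hq; lia.
move: e1 e2 e3; rewrite /t => e1 e2 e3; rewrite e1 e3 addKn e2; lia.
Qed.
End Lr.

Definition Aw (w : seq nat) q := nth 0 w q.-1 < nth 0 w q.
Definition Pw (w : seq nat) q := (nth 0 w q.-1 < nth 0 w q) && (nth 0 w q == nth 0 w q.+1).

Lemma count_window (P : pred nat) a L K : a + L <= K ->
  (forall q, q < K -> ~~ (a <= q < a + L) -> ~~ P q) ->
  count P (iota 0 K) = count P (iota a L).
Proof.
move=> hK h.
have -> : K = a + (L + (K - a - L)) by lia.
rewrite iotaD iotaD !count_cat.
rewrite (eq_in_count (a1 := P) (a2 := pred0) (s := iota 0 a)); last first.
  move=> q; rewrite mem_iota => hq; apply/negbTE/h; lia.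
rewrite (eq_in_count (a1 := P) (a2 := pred0) (s := iota (0 + a + L) _)); last first.
  move=> q; rewrite mem_iota => hq; apply/negbTE/h; lia.
by rewrite !count_pred0 add0n addn0 add0n.
Qed.

Lemma asc_ext w K : size w < K -> asc w = count (Aw w) (iota 0 K).
Proof.
move=> hK; rewrite /asc (@count_window (Aw w) 1 (size w).-1 K); [by [] | lia | ].
move=> q hq hr; rewrite /Aw.
case: (posnP q) => [->|qp]; first by rewrite ltnn.
rewrite [nth 0 w q]nth_default ?ltn0 //; lia.
Qed.

Lemma ap_ext w K : all (fun v => 0 < v) w -> size w < K -> ap w = count (Pw w) (iota 0 K).
Proof.
move=> /allP hp hK; rewrite /ap (@count_window (Pw w) 1 (size w).-2 K); [by [] | lia | ].
move=> q hq hr; rewrite /Pw.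
case: (posnP q) => [->|qp]; first by rewrite ltnn.
case: (ltnP q (size w)) => hq2.
  have e : q = (size w).-1 by lia.
  rewrite [nth 0 w q.+1]nth_default; last lia.
  have : 0 < nth 0 w q by apply: hp; apply: mem_nth.
  case: (nth 0 w q) => //= x _; by rewrite andbF.
by rewrite [nth 0 w q]nth_default.
Qed.

Section Ins.
Variables (k m i : nat) (s : seq nat).
Hypotheses (hi : i <= size s).
Lemma nlt q : q < i -> nth 0 (ins k m i s) q = nth 0 s q.
Proof. by move=> h; rewrite nth_ins // h. Qed.
Lemma nmid q : i <= q < i + k -> nth 0 (ins k m i s) q = m.
Proof. by move=> /andP[h1 h2]; rewrite nth_ins // h2 ifF //; lia. Qed.
Lemma nge q : i + k <= q -> nth 0 (ins k m i s) q = nth 0 s (q - k).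
Proof. by move=> h; rewrite nth_ins // ifF ?ifF //; lia. Qed.
End Ins.

Section Stats.
Variables (m : nat) (s : seq nat).
Hypotheses (hm : 0 < m) (ha : all (fun v => v < m) s).
Let hn q : nth 0 s q < m.
Proof.
case: (ltnP q (size s)) => h; first by apply: (allP ha); apply: mem_nth.
by rewrite nth_default.
Qed.

Lemma asc_ins0 : asc (ins 1 m 0 s) = asc s.
Proof.
rewrite (@asc_ext _ (size s + 3)) ?size_ins //; last lia.
rewrite (@asc_ext _ (size s + 2)); last lia.
have -> : size s + 3 = 2 + (size s).+1 by lia.
rewrite iotaD count_cat.
have -> : size s + 2 = 1 + (size s).+1 by lia.
rewrite iotaD count_cat.
have -> : count (Aw (ins 1 m 0 s)) (iota 0 2) = 0.
  rewrite /= /Aw /= ltnn (@nmid 1 m 0 s _ 0) // (@nge 1 m 0 s _ 1) //; by rewrite subnn ltnNge (ltnW (hn 0)).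
have -> : count (Aw s) (iota 0 1) = 0 by rewrite /= /Aw ltnn.
rewrite !add0n; apply: (@count_shift _ _ 1 1) => q hq.
rewrite /Aw !nge //; try lia; congr (nth _ _ _ < nth _ _ _); lia.
Qed.

Lemma asc_insS i : 0 < i <= size s -> asc (ins 1 m i s) + Aw s i = asc s + 1.
Proof.
move=> /andP [i0 hi].
rewrite (@asc_ext _ (size s + 3)) ?size_ins //; last lia.
rewrite (@asc_ext _ (size s + 2)); last lia.
have -> : size s + 3 = i + (2 + (size s + 1 - i)) by lia.
rewrite iotaD iotaD !count_cat.
have -> : size s + 2 = i + (1 + (size s + 1 - i)) by lia.
rewrite iotaD iotaD !count_cat.
have -> : count (Aw (ins 1 m i s)) (iota 0 i) = count (Aw s) (iota 0 i).
  apply: eq_in_count => q; rewrite mem_iota => hq.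
  by rewrite /Aw !nlt //; lia.
have -> : count (Aw (ins 1 m i s)) (iota (0 + i) 2) = 1.
  rewrite add0n /= /Aw /=.
  rewrite (@nlt 1 m i s hi i.-1); last lia.
  rewrite (@nmid 1 m i s hi i); last lia.
  rewrite (@nge 1 m i s hi i.+1); last lia.
  by rewrite hn ltnNge (ltnW (hn _)).
have -> : count (Aw s) (iota (0 + i) 1) = Aw s i by rewrite /= add0n addn0.
have -> : 0 + i + 2 = (i + 1) + 1 by lia.
have -> : 0 + i + 1 = (i + 1) by lia.
rewrite (@count_shift _ (Aw s)); first lia.
move=> q hq; rewrite /Aw !nge //; try lia; congr (nth _ _ _ < nth _ _ _); lia.
Qed.


Lemma ap_ins0 : all (fun v => 0 < v) s -> ap (ins 2 m 0 s) = ap s.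
Proof.
move=> hp.
have hpt : all (fun v => 0 < v) (ins 2 m 0 s).
  rewrite (eq_all_r (perm_mem (perm_ins 2 m 0 s))) all_cat hp /= hm //.
rewrite (@ap_ext _ (size s + 4)) ?size_ins //; last lia.
rewrite (@ap_ext _ (size s + 2)) //; last lia.
have -> : size s + 4 = 3 + (size s).+1 by lia.
rewrite iotaD count_cat.
have -> : size s + 2 = 1 + (size s).+1 by lia.
rewrite iotaD count_cat.
have -> : count (Pw (ins 2 m 0 s)) (iota 0 3) = 0.
  rewrite /= /Pw /= ltnn (@nmid 2 m 0 s _ 0) // (@nmid 2 m 0 s _ 1) // (@nge 2 m 0 s _ 2) //.
  by rewrite ltnn subnn ltnNge (ltnW (hn 0)).
have -> : count (Pw s) (iota 0 1) = 0 by rewrite /= /Pw ltnn.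
rewrite !add0n; apply: (@count_shift _ _ 1 2) => q hq.
rewrite /Pw !nge //; try lia.
have e1 : (q + 2).-1 - 2 = q.-1 by lia.
have e2 : q + 2 - 2 = q by lia.
have e3 : (q + 2).+1 - 2 = q.+1 by lia.
by rewrite e1 e2 e3.
Qed.

Lemma ap_insS i : all (fun v => 0 < v) s -> 0 < i <= size s ->
  ap (ins 2 m i s) + Pw s i.-1 + Pw s i = ap s + 1.
Proof.
move=> hp; case: i => // j /= hi.
have hpt : all (fun v => 0 < v) (ins 2 m j.+1 s).
  rewrite (eq_all_r (perm_mem (perm_ins 2 m j.+1 s))) all_cat hp /= hm //.
rewrite (@ap_ext _ (size s + 4)) ?size_ins //; last lia.
rewrite (@ap_ext _ (size s + 2)) //; last lia.
have -> : size s + 4 = j + (4 + (size s - j)) by lia.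
rewrite iotaD iotaD !count_cat.
have -> : size s + 2 = j + (2 + (size s - j)) by lia.
rewrite iotaD iotaD !count_cat.
have -> : count (Pw (ins 2 m j.+1 s)) (iota 0 j) = count (Pw s) (iota 0 j).
  apply: eq_in_count => q; rewrite mem_iota => hq.
  by rewrite /Pw !nlt //; lia.
have -> : count (Pw (ins 2 m j.+1 s)) (iota (0 + j) 4) = 1.
  rewrite add0n /= /Pw /=.
  rewrite (@nlt 2 m j.+1 s hi j.-1); last lia.
  rewrite (@nlt 2 m j.+1 s hi j); last lia.
  rewrite (@nmid 2 m j.+1 s hi j.+1); last lia.
  rewrite (@nmid 2 m j.+1 s hi j.+2); last lia.
  rewrite (@nge 2 m j.+1 s hi j.+3); last lia.
  have -> : (nth 0 s j == m) = false by apply/negbTE; rewrite neq_ltn hn.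
  by rewrite ltnn andbF hn eqxx andFb ltnNge (ltnW (hn _)).
have -> : count (Pw s) (iota (0 + j) 2) = Pw s j + Pw s j.+1 by rewrite /= add0n addn0.
have -> : 0 + j + 4 = (j + 2) + 2 by lia.
have -> : 0 + j + 2 = (j + 2) by lia.
rewrite (@count_shift _ (Pw s)); first lia.
move=> q hq; rewrite /Pw !nge //; try lia.
have e1 : (q + 2).-1 - 2 = q.-1 by lia.
have e2 : q + 2 - 2 = q by lia.
have e3 : (q + 2).+1 - 2 = q.+1 by lia.
by rewrite e1 e2 e3.
Qed.

End Stats.

Open Scope ring_scope.

Section Alg.
Variable R : comNzRingType.

Lemma sum2 (r : seq nat) (b : pred nat) (F : bool -> R) :
  \sum_(i <- r) F (b i) = F true *+ count b r + F false *+ count (predC b) r.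
Proof.
elim: r => [|x r IH]; first by rewrite big_nil /= !mulr0n addr0.
rewrite big_cons IH /=; case: (b x) => /=; rewrite ?add0n ?add1n !mulrS; ring.
Qed.

Lemma sum4 (r : seq nat) (b c : pred nat) (F : bool -> bool -> R) :
  \sum_(i <- r) F (b i) (c i) =
    F true true *+ count (fun i => b i && c i) r + F true false *+ count (fun i => b i && ~~ c i) r
  + F false true *+ count (fun i => ~~ b i && c i) r + F false false *+ count (fun i => ~~ b i && ~~ c i) r.
Proof.
elim: r => [|x r IH]; first by rewrite big_nil /= !mulr0n !addr0.
rewrite big_cons IH /=; case: (b x); case: (c x) => /=; rewrite ?add0n ?add1n !mulrS; ring.
Qed.

Definition Bs (c : nat) (F : nat -> R) := \sum_(k < c.+1) F k *+ 'C(c, k).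

Lemma Bs_add c F G : Bs c (fun k => F k + G k) = Bs c F + Bs c G.
Proof. by rewrite /Bs -big_split /=; apply: eq_bigr => k _; rewrite mulrnDl. Qed.

Lemma Bs_muln c F a : Bs c (fun k => F k *+ a) = Bs c F *+ a.
Proof. by rewrite /Bs -sumrMnl; apply: eq_bigr => k _; rewrite -!mulrnA mulnC. Qed.

Lemma Bs_S c F : Bs c.+1 F = Bs c F + Bs c (fun k => F k.+1).
Proof.
rewrite /Bs big_ord_recl /= bin0.
under eq_bigr => k _ do rewrite binS mulrnDr.
rewrite big_split /= addrA; congr (_ + _).
rewrite [in RHS]big_ord_recl bin0 [in LHS]big_ord_recr /= bin_small ?ltnSn // mulr0n addr0.
by congr (_ + _); apply: eq_bigr => i _.
Qed.

Definition gstep (n : nat) (f : nat -> nat -> nat -> R) l a e :=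
  f l.+1 a e + (f l a e + f l a e.+1) *+ a + (f l a.+1 e + f l a.+1 e.+1) *+ (n - a).

End Alg.

Close Scope ring_scope.

Lemma ms2S n : multiset2 n.+1 = multiset2 n ++ [:: n.+1; n.+1].
Proof.
have e : iota 1 n.+1 = iota 1 n ++ [:: n.+1] by rewrite -[n.+1]addn1 iotaD add1n addn1.
by rewrite /multiset2 e map_cat flatten_cat /=.
Qed.

Lemma ms2_all n : all (fun v => 0 < v <= n) (multiset2 n).
Proof.
elim: n => [|n IH] //; rewrite ms2S all_cat; apply/andP; split; last by rewrite /= leqnn.
by apply: sub_all IH => v /andP [-> /= h]; apply: leqW.
Qed.

Lemma size_ms2 n : size (multiset2 n) = (2 * n)%N.
Proof. elim: n => [|n IH] //; rewrite ms2S size_cat IH /=; lia. Qed.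

Lemma Pw_disj w q : Pw w q && Pw w q.+1 = false.
Proof.
apply/negbTE/negP; rewrite /Pw /= => /andP [/andP [_ /eqP e] /andP [h _]].
by rewrite e ltnn in h.
Qed.

Lemma orb_add (a b : bool) : a && b = false -> (a || b : nat) = (a + b)%N.
Proof. by case: a; case: b. Qed.

Lemma pair_odd (P : pred nat) : (forall q, P q && P q.+1 = false) -> forall k,
  count (fun i => (P i.-1 || P i) && odd i) (iota 1 (2 * k)) = count P (iota 0 (2 * k)).
Proof.
move=> hP; elim=> [|k IH] //.
rewrite mulnS -[(2 + 2 * k)%N]addnC !iota_add2 !count_cat IH /=.
rewrite !add0n !add1n oddM /= !andbT !andbF !addn0.
by rewrite orb_add.
Qed.

Lemma pair_even (P : pred nat) : (forall q, P q && P q.+1 = false) -> forall k,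
  count (fun i => (P i.-1 || P i) && ~~ odd i) (iota 1 (2 * k)) = count P (iota 1 (2 * k)).
Proof.
move=> hP; elim=> [|k IH] //.
rewrite mulnS -[(2 + 2 * k)%N]addnC !iota_add2 !count_cat IH /=.
rewrite !add0n !add1n oddM /= !andbT !andbF !addn0 ?add0n.
by rewrite orb_add.
Qed.

Lemma count_odd k : count odd (iota 1 (2 * k)) = k.
Proof.
elim: k => [|k IH] //; rewrite mulnS -[(2 + 2 * k)%N]addnC iota_add2 count_cat IH /=.
rewrite ?add1n oddM /=; lia.
Qed.

Lemma count_split (a b : pred nat) r :
  (count (fun i => a i && b i) r + count (fun i => ~~ a i && b i) r)%N = count b r.
Proof. elim: r => [|x r IH] //=; case: (a x); case: (b x) => /=; lia. Qed.

Lemma iotaS1 n : iota 1 n.+1 = iota 1 n ++ [:: n.+1].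
Proof. by rewrite -[n.+1]addn1 iotaD add1n addn1. Qed.

Lemma index_ins_m k m i s : 0 < k -> m \notin s -> i <= size s -> index m (ins k m i s) = i.
Proof.
move=> hk ms hi; rewrite /ins index_cat ifF; last first.
  by apply/negP => /mem_take; apply/negP.
rewrite size_takel // index_cat mem_nseq hk eqxx /=.
by case: k hk => //= k _; rewrite eqxx addn0.
Qed.

Lemma index_ins_other m i s v : v != m -> i <= size s ->
  odd (index v (ins 2 m i s)) = odd (index v s).
Proof.
move=> vm hi; rewrite -{2}(cat_take_drop i s) /ins !index_cat.
case: (v \in take i s) => //.
rewrite mem_nseq /= (negbTE vm).
by rewrite addnCA [odd (2 + _)]oddD.
Qed.

Lemma even_ins n s i : all (fun v => v < n.+1) s -> i <= size s ->
  even_idx n.+1 (ins 2 n.+1 i s) = (even_idx n s + odd i)%N.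
Proof.
move=> ha hi.
have ms : n.+1 \notin s by apply/negP => /(allP ha); rewrite ltnn.
rewrite /even_idx iotaS1 count_cat /= index_ins_m // addn0; congr (_ + _)%N.
apply: eq_in_count => v; rewrite mem_iota => hv.
by apply: index_ins_other => //; rewrite neq_ltn; lia.
Qed.

Lemma Pw_big w q : size w <= q -> Pw w q = false.
Proof. by move=> h; rewrite /Pw [nth 0 w q]nth_default. Qed.

Lemma stir_local (R : comNzRingType) n (f : nat -> nat -> nat -> R) s :
  perm_eq s (multiset2 n) ->
  (\sum_(i <- iota 0 (2 * n).+1)
     f (lrmin (ins 2 n.+1 i s)) (ap (ins 2 n.+1 i s)) (even_idx n.+1 (ins 2 n.+1 i s))
  = gstep n f (lrmin s) (ap s) (even_idx n s))%R.
Proof.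
move=> hs.
have sz : size s = (2 * n)%N by rewrite (perm_size hs) size_ms2.
have hall : all (fun v => 0 < v <= n) s by rewrite (eq_all_r (perm_mem hs)) ms2_all.
have ha : all (fun v => v < n.+1) s by apply: sub_all hall => v /andP [_ h].
have hp : all (fun v => 0 < v) s by apply: sub_all hall => v /andP [h _].
rewrite /= big_cons.
rewrite (@lrmin_ins 2 n.+1 0 s) // ap_ins0 // even_ins // addn0 addn1.
set l := lrmin s; set a := ap s; set e := even_idx n s.
pose D i := Pw s i.-1 || Pw s i.
pose F (b c : bool) := f l (if b then a else a.+1) (e + c)%N.
rewrite (eq_big_seq (fun i => F (D i) (odd i))); last first.
  move=> i; rewrite mem_iota => /andP [i1 i2].
  have hi : i <= size s by rewrite sz; lia.
  rewrite /F (@lrmin_ins 2 n.+1 i s isT hi ha) even_ins //.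
  have hi' : 0 < i <= size s by rewrite i1 hi.
  have h1 := @ap_insS n.+1 s isT ha i hp hi'.
  have hd := Pw_disj s i.-1.
  rewrite (_ : i.-1.+1 = i) in hd; last lia.
  rewrite /D -/a in h1 *.
  have -> : (i == 0) = false by lia.
  rewrite addn0; congr (f _ _ _).
  by move: hd h1; case: (Pw s i.-1); case: (Pw s i) => //= _; lia.
rewrite sum4.
have c1 : count (fun i => D i && odd i) (iota 1 (2 * n)) = a.
  rewrite /D pair_odd; last by move=> q; apply: Pw_disj.
  rewrite /a (@ap_ext s (2 * n + 1)) //; last by rewrite sz addn1.
  rewrite iotaD count_cat /= Pw_big; last by rewrite sz.
  by rewrite addn0 addn0.
have c2 : count (fun i => D i && ~~ odd i) (iota 1 (2 * n)) = a.
  rewrite /D pair_even; last by move=> q; apply: Pw_disj.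
  rewrite /a (@ap_ext s (1 + 2 * n)) //; last by rewrite sz; lia.
  by rewrite iotaD count_cat /= /Pw ltnn.
have c3 : count (fun i => ~~ D i && odd i) (iota 1 (2 * n)) = (n - a)%N.
  have := count_split D odd (iota 1 (2 * n)); rewrite count_odd c1; lia.
have c4 : count (fun i => ~~ D i && ~~ odd i) (iota 1 (2 * n)) = (n - a)%N.
  have := count_split D (predC odd) (iota 1 (2 * n)).
  have := count_predC odd (iota 1 (2 * n)).
  rewrite count_odd size_iota /=; rewrite c2; lia.
rewrite c1 c2 c3 c4 /F /gstep /= addn0 addn1 !mulrnDl; ring.
Qed.

Lemma ins_uncut k m i t : i + k <= size t ->
  (forall q, i <= q < i + k -> nth 0 t q = m) ->
  t = ins k m i (take i t ++ drop (i + k) t).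
Proof.
move=> hs hm.
have si : size (take i t) = i by rewrite size_takel //; lia.
rewrite /ins take_size_cat // drop_size_cat //.
rewrite -{1}(cat_take_drop i t); congr (_ ++ _).
rewrite -{1}(cat_take_drop k (drop i t)) drop_drop addnC; congr (_ ++ _).
apply: (@eq_from_nth _ 0).
  rewrite size_takel ?size_nseq // size_drop; lia.
move=> q; rewrite size_takel ?size_drop; last lia.
move=> hq; rewrite nth_take // nth_drop nth_nseq hq; apply: hm; lia.
Qed.

Lemma ins_cut k m i s : i <= size s ->
  take i (ins k m i s) ++ drop (i + k) (ins k m i s) = s.
Proof.
move=> hi.
have si : size (take i s) = i by rewrite size_takel.
rewrite /ins take_size_cat // addnC -drop_drop drop_size_cat // drop_size_cat ?size_nseq //.
exact: cat_take_drop.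
Qed.

Lemma ins_inj k m i j s s' : 0 < k -> m \notin s -> m \notin s' ->
  i <= size s -> j <= size s' -> ins k m i s = ins k m j s' -> i = j /\ s = s'.
Proof.
move=> hk ms ms' hi hj e.
have ij : i = j.
  have := index_ins_m hk ms hi; rewrite e index_ins_m //.
subst j; split => //.
by rewrite -(ins_cut k m hi) e ins_cut.
Qed.

Lemma decomp k m N (base big : seq (seq nat)) : 0 < k ->
  uniq base -> uniq big ->
  (forall s, s \in base -> m \notin s /\ size s = N) ->
  (forall s i, s \in base -> i <= N -> ins k m i s \in big) ->
  (forall t, t \in big -> exists2 s, s \in base & exists2 i, i <= N & t = ins k m i s) ->
  perm_eq big [seq ins k m i s | s <- base, i <- iota 0 N.+1].
Proof.
move=> hk ub ubig hb hin hout.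
apply: uniq_perm => //.
  apply: allpairs_uniq => //; first exact: iota_uniq.
  move=> [s i] [s' j] ha hb'.
  case/allpairsP: ha => [[s1 i1] /= [h1 h2 [-> ->]]].
  case/allpairsP: hb' => [[s2 i2] /= [h3 h4 [-> ->]]] /= e.
  have [ms sz] := hb _ h1; have [ms' sz'] := hb _ h3.
  have h2' : i1 <= N by move: h2; rewrite inE mem_iota; case/orP; lia.
  have h4' : i2 <= N by move: h4; rewrite inE mem_iota; case/orP; lia.
  have hi1 : i1 <= size s1 by rewrite sz.
  have hi2 : i2 <= size s2 by rewrite sz'.
  by case: (ins_inj hk ms ms' hi1 hi2 e) => -> ->.
move=> t; apply/idP/allpairsP.
  move=> /hout [s hs [i hi ->]]; exists (s, i); split => //.
  by rewrite mem_iota /=; lia.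
move=> [[s i] /= [hs hi ->]]; apply: hin => //; move: hi; rewrite inE mem_iota; case/orP; lia.
Qed.

Lemma mem_stir n s : (s \in stirling_perms n) = perm_eq s (multiset2 n) && stirling_cond s.
Proof. by rewrite mem_filter mem_permutations andbC. Qed.

Lemma not_take_index (m : nat) t : m \notin take (index m t) t.
Proof.
move: (cat_take_drop (index m t) t) => e.
apply/negP => h.
have h1 : index m t = index m (take (index m t) t) by rewrite -{1}e index_cat h.
have h2 := index_mem m (take (index m t) t); rewrite h in h2.
have h4 : size (take (index m t) t) <= index m t by rewrite size_take; case: ltnP.
move: h1 h2 h4; set a := index m t; set b := index m _; set c := size _; lia.
Qed.

Lemma stir_decomp n : perm_eq (stirling_perms n.+1)
  [seq ins 2 n.+1 i s | s <- stirling_perms n, i <- iota 0 (2 * n).+1].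
Proof.
have ms2n : n.+1 \notin multiset2 n.
  by apply/negP => /(allP (ms2_all n)); lia.
apply: decomp => //.
- exact/filter_uniq/permutations_uniq.
- exact/filter_uniq/permutations_uniq.
- move=> s; rewrite mem_stir => /andP [ps _]; split.
    by rewrite (perm_mem ps).
  by rewrite (perm_size ps) size_ms2.
- move=> s i; rewrite !mem_stir => /andP [ps sc] hi.
  have sz : size s = (2 * n)%N by rewrite (perm_size ps) size_ms2.
  have ha : all (fun v => v < n.+1) s.
    rewrite (perm_all _ ps); apply: sub_all (ms2_all n) => v /andP [_ h]; lia.
  rewrite SC_ins ?sz // sc andbT ms2S.
  by apply: perm_trans (perm_ins _ _ _ _) _; rewrite perm_cat2r.
move=> t; rewrite mem_stir => /andP [pt sct].
have allt : all (fun v => v <= n.+1) t.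
  rewrite (perm_all _ pt); apply: sub_all (ms2_all n.+1) => v /andP [_ h]; lia.
rewrite ms2S in pt.
set m := n.+1.
have mt : m \in t by rewrite (perm_mem pt) mem_cat mem_head orbT.
set i := index m t.
have hi : i < size t by rewrite index_mem.
have ti : nth 0 t i = m by rewrite nth_index.
have cnt2 : count_mem m t = 2.
  rewrite ((permP pt) (pred1 m)) count_cat (count_memPn ms2n) /= eqxx.
  done.
have et : t = take i t ++ m :: drop i.+1 t by rewrite -ti -drop_nth // cat_take_drop.
have cd : count_mem m (drop i.+1 t) = 1.
  move: cnt2; rewrite {1}et count_cat (count_memPn (not_take_index m t)) /= eqxx.
  by move=> [].
have md : m \in drop i.+1 t by rewrite -has_pred1 has_count cd.
clearbody i.
set j := index m (drop i.+1 t).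
have hj : j < size (drop i.+1 t) by rewrite index_mem.
have tj : nth 0 t (i.+1 + j) = m by rewrite -nth_drop nth_index.
clearbody j.
have j0 : j = 0.
  case: (posnP j) => // jp.
  have hj' : j < size t - i.+1 by rewrite -size_drop.
  have h2 : i.+1 < i.+1 + j by lia.
  have h3 : i.+1 + j < size t by lia.
  have := (SCPP t sct) i i.+1 (i.+1 + j) (ltnSn _) h2 h3.
  rewrite ti tj => /(_ erefl) h.
  have : nth 0 t i.+1 <= m.
    apply: (allP allt); apply: mem_nth; rewrite size_drop in hj; lia.
  lia.
rewrite j0 addn0 in tj.
rewrite size_drop j0 in hj.
have h5 : i + 2 <= size t by lia.
have h6 : forall q, i <= q < i + 2 -> nth 0 t q = m.
  by move=> q hq; have [->|->] : q = i \/ q = i.+1 by lia.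
have et2 := @ins_uncut 2 m i t h5 h6.
set s := take i t ++ drop (i + 2) t.
have szs : size s = (size t - 2)%N by rewrite size_cat size_takel ?size_drop; lia.
have ps : perm_eq s (multiset2 n).
  rewrite -(perm_cat2r [:: m; m]); apply: perm_trans pt.
  by rewrite et2 perm_sym (perm_ins 2 m i s).
have szt : size t = (2 * n + 2)%N by rewrite (perm_size pt) size_cat size_ms2.
exists s.
  rewrite mem_stir ps /=.
  have ha : all (fun v => v < n.+1) s.
    rewrite (perm_all _ ps); apply: sub_all (ms2_all n) => v /andP [_ h]; lia.
  by rewrite -(@SC_ins m i s) -?et2 // szs; lia.
by exists i => //; lia.
Qed.

Lemma perm_decomp n : perm_eq (permutations (iota 1 n.+1))
  [seq ins 1 n.+1 i s | s <- permutations (iota 1 n), i <- iota 0 n.+1].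
Proof.
apply: decomp => //.
- exact/permutations_uniq.
- exact/permutations_uniq.
- move=> s; rewrite mem_permutations => ps; split.
    by rewrite (perm_mem ps) mem_iota; lia.
  by rewrite (perm_size ps) size_iota.
- move=> s i; rewrite !mem_permutations => ps hi.
  by rewrite iotaS1; apply: perm_trans (perm_ins _ _ _ _) _; rewrite perm_cat2r.
move=> t; rewrite mem_permutations => pt.
rewrite iotaS1 in pt.
set m := n.+1.
have mt : m \in t by rewrite (perm_mem pt) mem_cat mem_head orbT.
set i := index m t.
have hi : i < size t by rewrite index_mem.
have ti : nth 0 t i = m by rewrite nth_index.
have h5 : i + 1 <= size t by lia.
have h6 : forall q, i <= q < i + 1 -> nth 0 t q = m.
  by move=> q hq; have -> : q = i by lia.
have et2 := @ins_uncut 1 m i t h5 h6.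
set s := take i t ++ drop (i + 1) t.
have szs : size s = (size t - 1)%N by rewrite size_cat size_takel ?size_drop; lia.
have ps : perm_eq s (iota 1 n).
  rewrite -(perm_cat2r [:: m]); apply: perm_trans pt.
  by rewrite et2 perm_sym (perm_ins 1 m i s).
have szt : size t = n.+1 by rewrite (perm_size pt) size_cat size_iota addn1.
exists s; first by rewrite mem_permutations.
by exists i => //; lia.
Qed.

Definition cnt (w : seq nat) := count (fun q => ~~ lrmin_pos w q) (iota 0 (size w)).

Lemma Bs_gstep (R : comNzRingType) n (f : nat -> nat -> nat -> R) c l a :
  Bs c (gstep n f l a) = (Bs c (f l.+1 a) + (Bs c (f l a) + Bs c (fun k => f l a k.+1)) *+ a
     + (Bs c (f l a.+1) + Bs c (fun k => f l a.+1 k.+1)) *+ (n - a))%R.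
Proof.
rewrite /Bs !mulrnDl -!sumrMnl -!big_split /=; apply: eq_bigr => k _.
rewrite /gstep !mulrnDl -!mulrnA !(mulnC _ 'C(c, k)) !mulrnA; ring.
Qed.

Lemma perm_local (R : comNzRingType) n (f : nat -> nat -> nat -> R) p :
  perm_eq p (iota 1 n) ->
  (\sum_(i <- iota 0 n.+1)
     Bs (cnt (ins 1 n.+1 i p)) (f (lrmin (ins 1 n.+1 i p)) (asc (ins 1 n.+1 i p)))
  = Bs (cnt p) (gstep n f (lrmin p) (asc p)))%R.
Proof.
move=> hs.
have sz : size p = n by rewrite (perm_size hs) size_iota.
have hall : all (fun v => 0 < v <= n) p.
  rewrite (eq_all_r (perm_mem hs)); apply/allP => v; rewrite mem_iota; lia.
have ha : all (fun v => v < n.+1) p by apply: sub_all hall => v /andP [_ h].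
rewrite /= big_cons.
have e0 := @count_lrpos 1 n.+1 0 p isT (leq0n _) ha.
rewrite /cnt e0 subnn addn0 -/(cnt p).
rewrite (@lrmin_ins 1 n.+1 0 p) // asc_ins0 // addn1.
set l := lrmin p; set a := asc p; set c := cnt p.
pose H (b : bool) := (Bs c (f l (if b then a else a.+1)) + Bs c (fun k => f l (if b then a else a.+1) k.+1))%R.
rewrite (eq_big_seq (fun i => H (Aw p i))); last first.
  move=> i; rewrite mem_iota => /andP [i1 i2].
  have hi : i <= size p by rewrite sz; lia.
  have hi' : 0 < i <= size p by rewrite i1 hi.
  have e1 := @count_lrpos 1 n.+1 i p isT hi ha.
  rewrite /cnt e1 -/(cnt p) (@lrmin_ins 1 n.+1 i p isT hi ha).
  have -> : (i == 0) = false by lia.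
  rewrite addn0 subn0 addn1 Bs_S /H.
  have h1 := @asc_insS n.+1 p isT ha i hi'.
  rewrite -/a in h1.
  move: h1; case: (Aw p i) => h1.
    by have -> : asc (ins 1 n.+1 i p) = a by lia.
  by have -> : asc (ins 1 n.+1 i p) = a.+1 by lia.
rewrite sum2.
have c1 : count (Aw p) (iota 1 n) = a.
  rewrite /a (@asc_ext p (1 + n)); last by rewrite sz.
  by rewrite iotaD count_cat /= /Aw ltnn.
have c2 : count (predC (Aw p)) (iota 1 n) = (n - a)%N.
  have := count_predC (Aw p) (iota 1 n); rewrite size_iota c1; lia.
rewrite c1 c2 Bs_gstep /H /=; ring.
Qed.

Open Scope ring_scope.

Section Final.
Variable R : comNzRingType.

Definition Wn n (f : nat -> nat -> nat -> R) :=
  \sum_(s <- stirling_perms n) f (lrmin s) (ap s) (even_idx n s).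
Definition Vn n (f : nat -> nat -> nat -> R) :=
  \sum_(p <- permutations (iota 1 n)) Bs (cnt p) (f (lrmin p) (asc p)).

Lemma W_rec n f : Wn n.+1 f = Wn n (gstep n f).
Proof.
rewrite /Wn (perm_big _ (stir_decomp n)) big_allpairs_dep /=.
apply: eq_big_seq => s; rewrite mem_stir => /andP [ps _].
exact: stir_local.
Qed.

Lemma V_rec n f : Vn n.+1 f = Vn n (gstep n f).
Proof.
rewrite /Vn (perm_big _ (perm_decomp n)) big_allpairs_dep /=.
apply: eq_big_seq => s; rewrite mem_permutations => ps.
exact: perm_local.
Qed.

Lemma stir0 : stirling_perms 0 = [:: [::]].
Proof.
rewrite /stirling_perms /multiset2 /= ifT //.
by apply/SCPP => j k l _ _ /=; rewrite ltn0.
Qed.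

Lemma WV n f : Wn n f = Vn n f.
Proof.
elim: n f => [|n IH] f; last by rewrite W_rec V_rec IH.
rewrite /Wn /Vn stir0 /= !big_cons !big_nil /Bs /cnt /=.
by rewrite big_ord_recl big_ord0 /= !addr0.
Qed.

Lemma card_count n (P : pred nat) : #|[set i : 'I_n | P i]| = count P (iota 0 n).
Proof.
have -> : iota 0 n = index_iota 0 n by rewrite /index_iota subn0.
rewrite -sum1_card -sum1_count big_mkord.
by apply: eq_bigl => i; rewrite inE.
Qed.

Lemma Bs_widen (c N : nat) (F : nat -> R) : (c < N)%N ->
  \sum_(k < N) F k *+ 'C(c, k) = Bs c F.
Proof.
move=> hc; rewrite /Bs -!(big_mkord predT (fun k => F k *+ 'C(c, k))).
rewrite (big_cat_nat _ (n := c.+1)) //=.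
have -> : \sum_(c.+1 <= k < N) F k *+ 'C(c, k) = 0.
  rewrite big_nat_cond big1 // => k /andP [/andP [hk _] _]; rewrite bin_small // mulr0n.
by rewrite addr0.
Qed.

Lemma marks_sum n p (F : nat -> R) : size p = n ->
  \sum_(M : {set 'I_n} | valid_marks p M) F #|M| = Bs (cnt p) F.
Proof.
move=> sz.
set A := [set i : 'I_n | ~~ lrmin_pos p i].
have eV : forall M, valid_marks p M = (M \subset A).
  move=> M; apply/forall_inP/subsetP => h i hi; first by rewrite inE; exact: h.
  by have := h i hi; rewrite inE.
rewrite (eq_bigl _ _ eV).
rewrite (partition_big (fun M : {set 'I_n} => (inord #|M| : 'I_n.+1)) predT) //=.
have hA : #|A| = cnt p by rewrite /A (card_count n (fun q => ~~ lrmin_pos p q)) /cnt sz.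
rewrite -hA -(Bs_widen _ (N := n.+1)); last by rewrite ltnS; apply: leq_trans (max_card _) _; by rewrite card_ord.
apply: eq_bigr => k _.
rewrite (eq_bigr (fun _ => F k)); last first.
  move=> M /andP [_ /eqP e]; congr F; rewrite -e inordK // ltnS; apply: leq_trans (max_card _) _; by rewrite card_ord.
apply: eq_trans (sumr_const [pred M : {set 'I_n} | (M \subset A) && (inord #|M| == k)] (F k)) _.
congr (_ *+ _).
rewrite -cards_draws; apply: eq_card => M; rewrite inE.
rewrite inE.
congr (_ && _); apply/eqP/eqP => [<-|->]; last by rewrite inord_val.
rewrite inordK // ltnS; apply: leq_trans (max_card _) _; by rewrite card_ord.
Qed.

End Final.

Close Scope ring_scope.


Open Scope ring_scope.

Theorem theorem1 (R : comNzRingType) (n : nat) (q x y : R) :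
  (1 <= n)%N ->
  \sum_(s <- stirling_perms n) q ^+ lrmin s * x ^+ ap s * y ^+ even_idx n s =
  \sum_(p <- permutations (iota 1 n))
     \sum_(M : {set 'I_n} | valid_marks p M) q ^+ lrmin p * x ^+ asc p * y ^+ #|M|.
Proof.
move=> _.
pose f (l a e : nat) := q ^+ l * x ^+ a * y ^+ e.
have -> : \sum_(s <- stirling_perms n) q ^+ lrmin s * x ^+ ap s * y ^+ even_idx n s = Wn n f by [].
rewrite WV /Vn; apply: eq_big_seq => p; rewrite mem_permutations => ps.
rewrite (@marks_sum R n p (fun k => f (lrmin p) (asc p) k)) //.
by rewrite (perm_size ps) size_iota.
Qed.
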